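(* Let $\langle X,d\rangle$ be a metric space. Then the family of real-valued strongly uniformly locally Lipschitz functions on $X$ is closed under pointwise multiplication if and only if $X$ is strongly uniformly locally bounded.
   Context: For $\varepsilon>0$, an $\varepsilon$-chain joining $x,y\in X$ is a finite sequence $x=x_0,\dots,x_n=y$ with $d(x_{i-1},x_i)<\varepsilon$; $S^\infty_d(x,\varepsilon)$ is the set of points joinable to $x$ by an $\varepsilon$-chain. $X$ is strongly uniformly locally bounded if there is $\delta>0$ such that $S^\infty_d(x,\delta)$ is bounded for every $x\in X$. A function $f:X\to\mathbb{R}$ is strongly uniformly locally Lipschitz if there is $\delta>0$ such that for every $x\in X$ the restriction of $f$ to $S^\infty_d(x,\delta)$ is Lipschitz (constant may depend on $x$). *)

(* Defs.v *)
From Stdlib Require Import Reals.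
Open Scope R_scope.

Definition is_metric {X : Type} (d : X -> X -> R) : Prop :=
  (forall x y, 0 <= d x y) /\
  (forall x y, d x y = 0 <-> x = y) /\
  (forall x y, d x y = d y x) /\
  (forall x y z, d x z <= d x y + d y z).

Definition eps_chain {X : Type} (d : X -> X -> R) (eps : R) (x y : X) : Prop :=
  exists (n : nat) (c : nat -> X),
    c 0%nat = x /\ c n = y /\
    (forall i : nat, (1 <= i <= n)%nat -> d (c (i - 1)%nat) (c i) < eps).

Definition S_inf {X : Type} (d : X -> X -> R) (x : X) (eps : R) : X -> Prop :=
  fun y => eps_chain d eps x y.

Definition bounded_set {X : Type} (d : X -> X -> R) (A : X -> Prop) : Prop :=
  exists M : R, forall a b, A a -> A b -> d a b <= M.

Definition strongly_unif_loc_bounded {X : Type} (d : X -> X -> R) : Prop :=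
  exists delta : R, 0 < delta /\ forall x : X, bounded_set d (S_inf d x delta).

Definition lipschitz_on {X : Type} (d : X -> X -> R) (A : X -> Prop) (f : X -> R) : Prop :=
  exists K : R, 0 <= K /\ forall a b, A a -> A b -> Rabs (f a - f b) <= K * d a b.

Definition strongly_unif_loc_lipschitz {X : Type} (d : X -> X -> R) (f : X -> R) : Prop :=
  exists delta : R, 0 < delta /\ forall x : X, lipschitz_on d (S_inf d x delta) f.

(* Main.v *)
Require Import Defs.
From Stdlib Require Import Reals.
From Stdlib Require Import Lra Lia Psatz Classical.
Open Scope R_scope.

Lemma chain_mono {X : Type} (d : X -> X -> R) x e1 e2 y :
  e1 <= e2 -> S_inf d x e1 y -> S_inf d x e2 y.
Proof.
  intros He [n [c [H0 [Hn Hc]]]]. exists n, c. split; [|split]; auto.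
  intros i Hi. specialize (Hc i Hi). lra.
Qed.

Lemma self_in {X : Type} (d : X -> X -> R) x e : S_inf d x e x.
Proof.
  exists 0%nat, (fun _ => x). split; [|split]; auto. intros i Hi; lia.
Qed.

Lemma fbound {X : Type} (d : X -> X -> R) (A : X -> Prop) (f : X -> R) x M K :
  (forall a b, A a -> A b -> d a b <= M) -> A x -> 0 <= K ->
  (forall a b, A a -> A b -> Rabs (f a - f b) <= K * d a b) ->
  forall a, A a -> Rabs (f a) <= Rabs (f x) + K * Rabs M.
Proof.
  intros HM Hx HK Hf a Ha.
  pose proof (HM a x Ha Hx). pose proof (Hf a x Ha Hx).
  pose proof (Rle_abs M).
  assert (Rabs (f a) <= Rabs (f a - f x) + Rabs (f x)).
  { replace (f a) with ((f a - f x) + f x) at 1 by ring. apply Rabs_triang. }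
  assert (K * d a x <= K * Rabs M) by (apply Rmult_le_compat_l; lra).
  lra.
Qed.

Theorem mainTheorem5 (X : Type) (d : X -> X -> R) (hd : is_metric d) :
  (forall f g : X -> R,
      strongly_unif_loc_lipschitz d f -> strongly_unif_loc_lipschitz d g ->
      strongly_unif_loc_lipschitz d (fun x => f x * g x))
  <-> strongly_unif_loc_bounded d.
Proof.
  destruct hd as [Hpos [Hzero [Hsym Htri]]].
  split.
  - intros H.
    destruct (classic (inhabited X)) as [[x0]|Hne].
    2:{ exists 1. split; [lra|]. intros x. exfalso; apply Hne; constructor; exact x. }
    set (f := fun y => d y x0).
    assert (Hf : strongly_unif_loc_lipschitz d f).
    { exists 1. split; [lra|]. intros x. exists 1. split; [lra|].
      intros a b _ _. unfold f.
      pose proof (Htri a b x0). pose proof (Htri b a x0). rewrite (Hsym b a) in *.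
      apply Rabs_le. lra. }
    destruct (H f f Hf Hf) as [delta [Hdel HL]].
    exists delta. split; auto. intros x.
    destruct (HL x) as [K [HK HLx]].
    set (r := d x x0).
    assert (Hb : forall a, S_inf d x delta a -> d x a <= 2 * r + K).
    { intros a Ha.
      pose proof (HLx a x Ha (self_in d x delta)) as Hl. unfold f in Hl.
      rewrite (Hsym a x) in Hl.
      set (t := d x a) in *. set (s := d a x0) in *.
      fold r in Hl.
      pose proof (Rle_abs (s * s - r * r)).
      assert (t <= r + s) by (unfold t, r, s; rewrite (Hsym a x0); apply Htri).
      assert (0 <= r) by apply Hpos. assert (0 <= s) by apply Hpos.
      assert (0 <= t) by apply Hpos.
      destruct (Rle_or_lt t (2 * r + K)) as [|Hc]; auto.
      exfalso. nra. }
    exists (2 * (2 * r + K)). intros a b Ha Hb'.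
    pose proof (Hb a Ha). pose proof (Hb b Hb'). pose proof (Htri a x b).
    rewrite (Hsym a x) in *. lra.
  - intros [d0 [Hd0 HB]] f g [df [Hdf Hf]] [dg [Hdg Hg]].
    set (delta := Rmin d0 (Rmin df dg)).
    assert (h1 : delta <= d0) by (unfold delta; apply Rmin_l).
    assert (h2 : delta <= df) by (unfold delta; eapply Rle_trans; [apply Rmin_r|apply Rmin_l]).
    assert (h3 : delta <= dg) by (unfold delta; eapply Rle_trans; [apply Rmin_r|apply Rmin_r]).
    exists delta. split.
    { unfold delta. apply Rmin_pos; auto. apply Rmin_pos; auto. }
    intros x.
    set (A := S_inf d x delta).
    destruct (HB x) as [M HM].
    destruct (Hf x) as [Kf [HKf Hfx]].
    destruct (Hg x) as [Kg [HKg Hgx]].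
    assert (HMA : forall a b, A a -> A b -> d a b <= M).
    { intros a b Ha Hb; apply HM; eapply chain_mono; eauto. }
    assert (HfA : forall a b, A a -> A b -> Rabs (f a - f b) <= Kf * d a b).
    { intros a b Ha Hb; apply Hfx; eapply chain_mono; eauto. }
    assert (HgA : forall a b, A a -> A b -> Rabs (g a - g b) <= Kg * d a b).
    { intros a b Ha Hb; apply Hgx; eapply chain_mono; eauto. }
    assert (HxA : A x) by apply self_in.
    pose proof (fbound d A f x M Kf HMA HxA HKf HfA) as Bf.
    pose proof (fbound d A g x M Kg HMA HxA HKg HgA) as Bg.
    set (BF := Rabs (f x) + Kf * Rabs M) in *.
    set (BG := Rabs (g x) + Kg * Rabs M) in *.
    assert (0 <= BF) by (pose proof (Rabs_pos (f x)); pose proof (Rabs_pos M); unfold BF; nra).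
    assert (0 <= BG) by (pose proof (Rabs_pos (g x)); pose proof (Rabs_pos M); unfold BG; nra).
    exists (BF * Kg + BG * Kf). split; [nra|].
    intros a b Ha Hb.
    replace (f a * g a - f b * g b) with (f a * (g a - g b) + g b * (f a - f b)) by ring.
    eapply Rle_trans; [apply Rabs_triang|]. rewrite !Rabs_mult.
    pose proof (Bf a Ha). pose proof (Bg b Hb).
    pose proof (HfA a b Ha Hb). pose proof (HgA a b Ha Hb).
    pose proof (Rabs_pos (f a)). pose proof (Rabs_pos (g b)).
    pose proof (Rabs_pos (f a - f b)). pose proof (Rabs_pos (g a - g b)).
    assert (Rabs (f a) * Rabs (g a - g b) <= BF * (Kg * d a b))
      by (apply Rmult_le_compat; auto).
    assert (Rabs (g b) * Rabs (f a - f b) <= BG * (Kf * d a b))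
      by (apply Rmult_le_compat; auto).
    nra.
Qed.
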